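(* Let $X$ be a $T_0$ topological space which is $k$-bounded sober. Then the following are equivalent: (i) the convergence class $\mathcal{I}$ of $\operatorname{Irr}$-convergence on $X$ is topological; (ii) $X$ is $\operatorname{Irr}$-continuous.
   Context: For a topological space $X$, a nonempty subset $E\subseteq X$ is irreducible if whenever $E\subseteq A_1\cup A_2$ with $A_1,A_2$ closed, then $E\subseteq A_1$ or $E\subseteq A_2$. The specialisation order is $x\le y$ iff $x\in\operatorname{cl}(\{y\})$; $\uparrow x=\{z: z\ge x\}$; suprema $\bigvee$ are least upper bounds with respect to this order. $\operatorname{Irr}^+(X)$ denotes the set of irreducible subsets of $X$ whose supremum exists. $X$ is $k$-bounded sober if every closed set $F\in\operatorname{Irr}^+(X)$ is the closure of a unique singleton. The $\operatorname{Irr}$-way-below relation: $x\ll_{\operatorname{Irr}} y$ iff for every $E\in\operatorname{Irr}^+(X)$ with $\bigvee E\ge y$ one has $E\cap\uparrow x\neq\emptyset$; write $\twoheaddownarrow_{\operatorname{Irr}} x=\{y: y\ll_{\operatorname{Irr}} x\}$. $X$ is $\operatorname{Irr}$-continuous if for every $x\in X$, $\twoheaddownarrow_{\operatorname{Irr}} x$ is irreducible in $X$ and $x=\bigvee\twoheaddownarrow_{\operatorname{Irr}} x$. A net $(x_i)_{i\in I}$ in $X$ is a map from a preorder $(I,\le)$ to $X$. A net $(x_i)_{i\in I}$ $\operatorname{Irr}$-converges to $y$ if there is $E\in\operatorname{Irr}^+(X)$ with $\bigvee E\ge y$ such that for each $e\in E$ there is $k(e)\in I$ with $x_i\ge e$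 for all $i\ge k(e)$. $\mathcal{I}$ is the relation between nets in $X$ and points of $X$ consisting of all pairs $((x_i)_{i\in I},y)$ with $(x_i)$ $\operatorname{Irr}$-converging to $y$. A convergence class $\mathcal{S}$ on $X$ is topological if there is a topology $\sigma$ on $X$ such that $((x_i),x)\in\mathcal{S}$ iff for every $U\in\sigma$ with $x\in U$ there is $i_0$ with $x_i\in U$ for all $i\ge i_0$. *)

(* Defs.v *)
From HB Require Import structures.
From mathcomp Require Import all_boot all_order.
From mathcomp Require Import all_classical topology.
Set Implicit Arguments. Unset Strict Implicit. Unset Printing Implicit Defensive.
Local Open Scope classical_set_scope.

Section IrrDefs.
Variable X : topologicalType.

Definition spec_le (x y : X) : Prop := closure [set y] x.

Definition upper_set (x : X) : set X := [set z | spec_le x z].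

Definition irreducible (E : set X) : Prop :=
  E !=set0 /\
  forall A1 A2 : set X, closed A1 -> closed A2 ->
    E `<=` A1 `|` A2 -> E `<=` A1 \/ E `<=` A2.

Definition is_sup (E : set X) (s : X) : Prop :=
  (forall e, E e -> spec_le e s) /\
  (forall u, (forall e, E e -> spec_le e u) -> spec_le s u).

Definition IrrPlus (E : set X) : Prop := irreducible E /\ exists s, is_sup E s.

Definition k_bounded_sober : Prop :=
  forall F : set X, closed F -> IrrPlus F -> exists! x : X, F = closure [set x].

Definition irr_way_below (x y : X) : Prop :=
  forall E : set X, IrrPlus E ->
    forall s, is_sup E s -> spec_le y s -> exists2 e, E e & spec_le x e.

Definition irr_ddown (x : X) : set X := [set y | irr_way_below y x].

Definition irr_continuous : Prop :=
  forall x : X, irreducible (irr_ddown x) /\ is_sup (irr_ddown x) x.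

Definition irr_converges (I : Type) (le : I -> I -> Prop) (x : I -> X) (y : X)
  : Prop :=
  exists E : set X, IrrPlus E /\
    (exists s, is_sup E s /\ spec_le y s) /\
    forall e, E e -> exists k : I, forall i, le k i -> spec_le e (x i).

Definition is_topology_on (sigma : set (set X)) : Prop :=
  sigma setT /\
  (forall U V, sigma U -> sigma V -> sigma (U `&` V)) /\
  (forall (F : set (set X)), F `<=` sigma -> sigma (\bigcup_(U in F) U)).

Definition irr_convergence_topological : Prop :=
  exists sigma : set (set X), is_topology_on sigma /\
    forall (I : Type) (le : I -> I -> Prop),
      (forall i, le i i) -> (forall i j k, le i j -> le j k -> le i k) ->
      forall (x : I -> X) (y : X),
        irr_converges le x y <->
        (forall U, sigma U -> U y -> exists i0 : I, forall i, le i0 i -> U (x i)).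

End IrrDefs.

(* Main.v *)
Require Import Defs.
From mathcomp Require Import all_boot all_order.
From mathcomp Require Import all_classical topology.
Set Implicit Arguments. Unset Strict Implicit. Unset Printing Implicit Defensive.
Local Open Scope classical_set_scope.

Section Aux.
Variable X : topologicalType.

Lemma cl_min (A B : set X) : closed A -> B `<=` A -> closure B `<=` A.
Proof. by move=> cA BA; rewrite (closure_id A).1 //; apply: closureS. Qed.

Lemma spec_refl (x : X) : spec_le x x.
Proof. exact: subset_closure. Qed.

Lemma closed_down (A : set X) x y : closed A -> A y -> spec_le x y -> A x.
Proof. by move=> cA Ay; apply: cl_min => // z ->. Qed.

Lemma spec_trans (x y z : X) : spec_le x y -> spec_le y z -> spec_le x z.
Proof. by move=> xy yz; apply: (closed_down (@closed_closure _ _) yz xy). Qed.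

Lemma irr_transfer (S T : set X) : S `<=` T -> T `<=` closure S ->
  irreducible S -> irreducible T.
Proof.
move=> ST TS [[s Ss] H]; split; first by exists s; apply: ST.
move=> A1 A2 c1 c2 TA.
have [h|h] := H A1 A2 c1 c2 (subset_trans ST TA).
  by left; apply: subset_trans TS _; apply: cl_min.
by right; apply: subset_trans TS _; apply: cl_min.
Qed.

Lemma irr_transfer' (S T : set X) : S `<=` T -> T `<=` closure S ->
  irreducible T -> irreducible S.
Proof.
move=> ST TS [[t Tt] H]; split.
  apply/set0P/negP => /eqP S0; have := TS _ Tt; by rewrite S0 closure0.
move=> A1 A2 c1 c2 SA.
have TA : T `<=` A1 `|` A2 by apply: subset_trans TS _; apply: cl_min => //; exact: closedU.
by have [h|h] := H A1 A2 c1 c2 TA; [left|right]; apply: subset_trans ST _.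
Qed.

Lemma sup_transfer (S T : set X) s : S `<=` T -> T `<=` closure S ->
  is_sup S s -> is_sup T s.
Proof.
move=> ST TS [ub lub]; split.
  move=> e Te; have := TS _ Te; apply: cl_min; first exact: closed_closure.
  by move=> z Sz; apply: ub.
by move=> u Hu; apply: lub => e Se; apply: Hu; apply: ST.
Qed.

Lemma sup_transfer' (S T : set X) s : S `<=` T -> T `<=` closure S ->
  is_sup T s -> is_sup S s.
Proof.
move=> ST TS [ub lub]; split.
  by move=> e Se; apply: ub; apply: ST.
move=> u Hu; apply: lub => e Te; have := TS _ Te; apply: cl_min;
  first exact: closed_closure.
by [].
Qed.


Lemma sup_in_closure : k_bounded_sober X -> forall (E : set X) (s : X), IrrPlus E ->
  is_sup E s -> closure E s.
Proof.
move=> ks E s [irrE _] supE.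
have EE : E `<=` closure E by exact: subset_closure.
have cc : closure E `<=` closure E by [].
have [x [Hx _]] := ks (closure E) (@closed_closure _ _)
  (conj (irr_transfer EE cc irrE) (ex_intro _ s (sup_transfer EE cc supE))).
have sup2 := sup_transfer EE cc supE.
rewrite Hx in sup2 *.
by apply: sup2.2 => e He.
Qed.

Lemma irrplus_single (y : X) : IrrPlus [set y].
Proof.
split; last by exists y; split=> [e ->|u Hu]; [exact: spec_refl|apply: Hu].
split; first by exists y.
move=> A1 A2 _ _ H; have [h|h] := H y erefl; [left|right] => z ->; done.
Qed.

Lemma wb_le (x y : X) : irr_way_below x y -> spec_le x y.
Proof.
move=> H.
have sy : is_sup [set y] y by split=> [e ->|u Hu]; [exact: spec_refl|apply: Hu].
by have [e -> //] := H [set y] (@irrplus_single y) y sy (@spec_refl y).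
Qed.

Lemma wb_up (x y z : X) : irr_way_below x y -> spec_le y z -> irr_way_below x z.
Proof. by move=> H yz E HE s Hs zs; apply: (H E HE s Hs); apply: spec_trans zs. Qed.

Lemma wb_down (x' x y : X) : spec_le x' x -> irr_way_below x y -> irr_way_below x' y.
Proof.
move=> x'x H E HE s Hs ys; have [e Ee xe] := H E HE s Hs ys.
by exists e => //; apply: spec_trans xe.
Qed.

Definition sigS (U : set X) : Prop :=
  (forall x y, U x -> spec_le x y -> U y) /\
  (forall E, IrrPlus E -> forall s, is_sup E s -> U s -> exists2 e, E e & U e).

Lemma sigS_miss (U : set X) E s : sigS U -> IrrPlus E -> is_sup E s -> U s ->
  ~ (E `<=` closure (E `\` U)).
Proof.
move=> [_ HU] [irrE _] supE Us H.
have S1 : E `\` U `<=` E by move=> z [].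
have irrS := irr_transfer' S1 H irrE.
have supS := sup_transfer' S1 H supE.
have [e [_ nUe] Ue] := HU _ (conj irrS (ex_intro _ s supS)) s supS Us.
by apply: nUe.
Qed.

Lemma sigS_top : is_topology_on sigS.
Proof.
split; [|split].
- split=> // E [[[e Ee] _] _] s _ _; by exists e.
- move=> U V [uU HU] [uV HV]; split.
    by move=> x y [Ux Vx] xy; split; [apply: uU xy|apply: uV xy].
  move=> E HE s Hs [Us Vs]; apply: contrapT => Hn.
  have cov : E `<=` closure (E `\` U) `|` closure (E `\` V).
    move=> e Ee; have [Ue|nUe] := pselect (U e).
      have [Ve|nVe] := pselect (V e); first by exfalso; apply: Hn; exists e.
      by right; apply: subset_closure.
    by left; apply: subset_closure.
  have [h|h] := HE.1.2 _ _ (@closed_closure _ _) (@closed_closure _ _) cov.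
    exact: (sigS_miss (conj uU HU) HE Hs Us h).
  exact: (sigS_miss (conj uV HV) HE Hs Vs h).
- move=> F FS; split.
    by move=> x y [U FU Ux] xy; exists U => //; apply: (FS U FU).1 xy.
  move=> E HE s Hs [U FU Us]; have [e Ee Ue] := (FS U FU).2 E HE s Hs Us.
  by exists e => //; exists U.
Qed.

Lemma interp : k_bounded_sober X -> irr_continuous X ->
  forall x y : X, irr_way_below x y -> exists d, irr_way_below x d /\ irr_way_below d y.
Proof.
move=> ks cont x y Hxy.
pose Es := [set z | exists2 d, irr_ddown y d & irr_way_below z d].
have supd : forall d : X, is_sup (irr_ddown d) d by move=> d; case: (cont d).
have irrd : forall d : X, irreducible (irr_ddown d) by move=> d; case: (cont d).
have irrEs : irreducible Es.
  split.
    have [[d Dd] _] := irrd y; have [[z Dz] _] := irrd d.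
    by exists z; exists d.
  move=> A1 A2 c1 c2 cov.
  have dA : irr_ddown y `<=` A1 `|` A2.
    move=> d Dd.
    have sub : irr_ddown d `<=` A1 `|` A2 by move=> z Dz; apply: cov; exists d.
    have inc := sup_in_closure ks (conj (irrd d) (ex_intro _ d (supd d))) (supd d).
    have [h|h] := (irrd d).2 _ _ c1 c2 sub.
      by left; apply: (cl_min c1 h).
    by right; apply: (cl_min c2 h).
  have fin : forall A, closed A -> irr_ddown y `<=` A -> Es `<=` A.
    move=> A cA DA z [d Dd zd]; apply: (closed_down cA (DA _ Dd)).
    exact: wb_le.
  by have [h|h] := (irrd y).2 _ _ c1 c2 dA; [left|right]; apply: fin.
have supEs : is_sup Es y.
  split.
    move=> z [d Dd zd]; apply: spec_trans (wb_le zd) (wb_le Dd).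
  move=> w Hw; apply: (supd y).2 => d Dd; apply: (supd d).2 => z Dz.
  by apply: Hw; exists d.
have [e [d Dd ed] xe] := Hxy Es (conj irrEs (ex_intro _ y supEs)) y supEs (@spec_refl y).
by exists d; split=> //; apply: wb_down xe ed.
Qed.

End Aux.

Theorem theorem1p1 (X : topologicalType) :
  kolmogorov_space X -> k_bounded_sober X ->
  (irr_convergence_topological X <-> irr_continuous X).
Proof.
move=> _ ks; split.
- move=> [sig [_ Hconv]].
  have up : forall U, sig U -> forall y x, U y -> spec_le y x -> U x.
    move=> U sU y x Uy yx.
    have Hc : irr_converges (fun _ _ : unit => True) (fun _ => x) y.
      exists [set x]; split; first exact: irrplus_single.
      split; first by exists x; split; [split=> [e ->|u Hu]; [exact: spec_refl|apply: Hu]|].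
      by move=> e -> ; exists tt => _ _; exact: spec_refl.
    have [i0 Hi] := (Hconv unit _ (fun _ => I) (fun _ _ _ _ _ => I) _ y).1 Hc U sU Uy.
    exact: Hi i0 I.
  have scott : forall U, sig U -> forall E, IrrPlus E -> forall s, is_sup E s ->
      U s -> exists2 e, E e & U e.
    move=> U sU E HE s Hs Us.
    pose le := fun i j : {e : X | E e} => spec_le (proj1_sig i) (proj1_sig j).
    have Hc : irr_converges le (fun i => proj1_sig i) s.
      exists E; split=> //; split; first by exists s; split=> //; exact: spec_refl.
      by move=> e Ee; exists (exist _ e Ee) => i.
    have [i0 Hi] := (Hconv _ le (fun i => @spec_refl _ _)
       (fun i j k => @spec_trans _ _ _ _) _ s).1 Hc U sU Us.
    by exists (proj1_sig i0); [exact: proj2_sig i0|apply: Hi; exact: spec_refl].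
  move=> x.
  pose J := {p : set X * X | [/\ sig p.1, p.1 x & p.1 p.2]}.
  pose le := fun i j : J => (proj1_sig j).1 `<=` (proj1_sig i).1.
  have Hc : irr_converges le (fun i => (proj1_sig i).2) x.
    apply: (Hconv J le (fun i => @subset_refl _ _) _ _ x).2.
      by move=> i j k ij jk; apply: subset_trans jk ij.
    move=> U sU Ux.
    exists (exist _ (U, x) (And3 sU Ux Ux)) => i VU.
    by apply: VU; case: (proj2_sig i).
  have [E [HE [[s [Hs xs]] Hk]]] := Hc.
  have ED : E `<=` irr_ddown x.
    move=> e Ee; have [k0 Hk0] := Hk e Ee.
    case: k0 Hk0 => -[U0 e0] P Hk0; simpl in Hk0.
    have [sU0 U0x _] := P.
    have upe : forall z, U0 z -> spec_le e z.
      move=> z U0z.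
      have := Hk0 (exist _ (U0, z) (And3 sU0 U0x U0z)).
      by apply.
    move=> F HF t Ht xt.
    have [f Ff U0f] := scott U0 sU0 F HF t Ht (up U0 sU0 x t U0x xt).
    by exists f => //; apply: upe.
  have supD : is_sup (irr_ddown x) x.
    split; first by move=> e De; exact: wb_le.
    move=> w Hw; apply: spec_trans xs _; apply: Hs.2 => e Ee; apply: Hw.
    exact: ED.
  split=> //.
  apply: (irr_transfer ED) HE.1.
  move=> d Dd; apply: (closed_down (@closed_closure _ _) (sup_in_closure ks HE Hs)).
  exact: spec_trans (wb_le Dd) xs.
- move=> cont.
  exists (@sigS X); split; first exact: sigS_top.
  move=> I le _ _ x y; split.
    move=> [E [HE [[s [Hs ys]] Hk]]] U [uU HU] Uy.
    have [e Ee Ue] := HU E HE s Hs (uU _ _ Uy ys).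
    have [k Hk'] := Hk e Ee; exists k => i ki; exact: uU _ _ Ue (Hk' i ki).
  move=> H; exists (irr_ddown y).
  have [irrD supD] := cont y.
  split; first by split=> //; exists y.
  split; first by exists y; split=> //; exact: spec_refl.
  move=> e De.
  have sW : sigS [set z | irr_way_below e z].
    split; first by move=> a b ea ab; exact: wb_up ea ab.
    move=> E HE s Hs es; have [d [ed ds]] := interp ks cont es.
    have [z Ez dz] := ds E HE s Hs (@spec_refl _ s).
    by exists z => //; exact: wb_up ed dz.
  have [i0 Hi] := H _ sW De.
  by exists i0 => i i0i; exact: wb_le (Hi i i0i).
Qed.
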